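(* Let $u=u_1u_2\cdots u_N$ be a universal cycle for $n$-permutations, possibly containing $\Diamond$ (as defined in the context), and let $n-k$ be its diamondicity. Then (i) $N=k!$. Moreover, letting $c=\gcd(n,N)$: (ii) the occurrences of $\Diamond$ in $u$ are $c$-periodic, i.e., for every $i$, $u_i=\Diamond$ if and only if $u_{i+c}=\Diamond$ (indices modulo $N$); and (iii) $\frac{n}{c}$ divides $n-k$; in particular $c\neq 1$ whenever $1\leq k\leq n-1$.
   Context: An $n$-permutation is a permutation of $\{1,\ldots,n\}$. For a word $w$ of distinct numbers, $\mathrm{red}(w)$ is obtained by replacing the $i$-th smallest letter by $i$. Let $\Diamond$ be a symbol not among the integers. A word $f=f_1\cdots f_n$ over the positive integers together with $\Diamond$, whose integer letters are pairwise distinct, covers an $n$-permutation $\pi$ if one can substitute real numbers for the occurrences of $\Diamond$ (independently) so that the resulting word has $n$ pairwise distinct entries and reduces to $\pi$; equivalently, $f_i<f_j\iff\pi_i<\pi_j$ for all positions $i,j$ holding integers. A universal cycle for $n$-permutations, possibly containing $\Diamond$, is a cyclic word $u_1\cdots u_N$ with $N\geq n$ over this alphabet, indices read modulo $N$, such that each of its $N$ cyclic factors $u_iu_{i+1}\cdots u_{i+n-1}$ ($1\leq i\leq N$) has pairwise distinct integer letters and every $n$-permutation is covered by exactly one of these factors. The number of $\Diamond$'s in a cyclic factor of length $n$ is the same for all such factors; this common number is called the diamondicity of $u$. *)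

(* Defs.v *)
From mathcomp Require Import all_boot fingroup perm.
Set Implicit Arguments. Unset Strict Implicit. Unset Printing Implicit Defensive.

(* Letters: [Some m] is the positive integer m, [None] is the symbol Diamond. *)
Definition letter := option nat.
Definition Diamond : letter := None.

(* The cyclic word u = u_0 ... u_{N-1} (0-based), N = size u. *)

Definition cfactor (u : seq letter) (n i : nat) (j : 'I_n) : letter :=
  nth Diamond u ((i + j) %% size u).
Arguments cfactor u n i j : clear implicits.

Definition factor_distinct (u : seq letter) (n i : nat) : Prop :=
  forall (j1 j2 : 'I_n) (a : nat),
    cfactor u n i j1 = Some a -> cfactor u n i j2 = Some a -> j1 = j2.

Definition covers (n : nat) (f : 'I_n -> letter) (pi : 'S_n) : Prop :=
  forall (i j : 'I_n) (a b : nat),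
    f i = Some a -> f j = Some b -> (a < b) = (pi i < pi j).

Definition universal_cycle (n : nat) (u : seq letter) : Prop :=
  [/\ n <= size u,
      (forall x, Some x \in u -> 0 < x),
      (forall i, i < size u -> factor_distinct u n i) &
      (forall pi : 'S_n, exists! i : 'I_(size u), covers (cfactor u n i) pi)].

Definition diamonds_in (u : seq letter) (n i : nat) : nat :=
  #|[pred j : 'I_n | cfactor u n i j == Diamond]|.

(* Main.v *)
Require Import Defs.
From mathcomp Require Import all_boot fingroup perm.
Set Implicit Arguments. Unset Strict Implicit. Unset Printing Implicit Defensive.


Lemma exists_sort (n : nat) (h : 'I_n -> nat) : forall m (S : {set 'I_n}), #|S| < m ->
  {in S &, injective h} -> forall pi : 'S_n,
  exists2 rho : 'S_n, rho \in Sym S &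
    {in S &, forall x y, (h x < h y) = (pi (rho x) < pi (rho y))}.
Proof.
elim=> // m IH S leS hinj pi.
have [->|[s0 s0S]] := set_0Vmem S.
  exists 1%g; first by rewrite inE perm_on1.
  by move=> x y; rewrite inE.
pose s := [arg max_(x > s0 in S) h x].
pose mx := [arg max_(x > s0 in S) (pi x : nat)].
have [sS smax] : s \in S /\ forall y, y \in S -> h y <= h s.
  by rewrite /s; case: arg_maxnP.
have [mxS mxmax] : mx \in S /\ forall y, y \in S -> pi y <= pi mx.
  by rewrite /mx; case: arg_maxnP.
pose r1 := tperm s mx.
have r1S : r1 \in Sym S.
  rewrite inE; apply: subset_trans (tperm_on s mx) _.
  by apply/subsetP=> z; rewrite !inE => /orP[]/eqP->.
have ltS' : #|S :\ s| < m.
  by move: leS; rewrite (cardsD1 s S) sS add1n ltnS.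
have hinj' : {in S :\ s &, injective h}.
  by move=> x y /setD1P[_ xS] /setD1P[_ yS]; apply: hinj.
have [r2 r2S H2] := IH _ ltS' hinj' (r1 * pi)%g.
exists (r2 * r1)%g.
  rewrite groupM //; move: r2S; rewrite !inE => r2S.
  by apply: subset_trans r2S _; apply/subsetP => z /setD1P[].
have r2on : perm_on (S :\ s) r2 by move: r2S; rewrite inE.
have r1on : perm_on S r1 by move: r1S; rewrite inE.
have r2s : r2 s = s.
  by apply: (out_perm r2on); rewrite !inE eqxx.
have r2in : forall y, y \in S :\ s -> r2 y \in S :\ s.
  by move=> y yS; rewrite (perm_closed _ r2on).
have lt_mx : forall y, y \in S :\ s -> pi (r1 (r2 y)) < pi mx.
  move=> y yS; have /setD1P[ys yS'] := r2in y yS.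
  have r1S' : r1 (r2 y) \in S.
    by rewrite (perm_closed _ r1on).
  rewrite ltn_neqAle mxmax // andbT; apply/negP => /eqP/val_inj/perm_inj E.
  have : r1 (r2 y) = r1 s by rewrite E /r1 tpermL.
  by move/perm_inj/eqP; rewrite (negbTE ys).
move=> x y xS yS; rewrite !permM.
have [->|xs] := eqVneq x s; have [->|ys] := eqVneq y s.
- by rewrite !ltnn.
- have yS' : y \in S :\ s by rewrite !inE ys.
  by rewrite r2s /r1 tpermL -/r1 !ltnNge (ltnW (lt_mx y yS')) smax.
- have xS' : x \in S :\ s by rewrite !inE xs.
  rewrite r2s /r1 tpermL -/r1 lt_mx // ltn_neqAle smax // andbT.
  by apply/eqP => /hinj; move/(_ xS sS) => /eqP; rewrite (negbTE xs).
- have xS' : x \in S :\ s by rewrite !inE xs.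
  have yS' : y \in S :\ s by rewrite !inE ys.
  by rewrite H2 // !permM.
Qed.

Lemma order_pres_id (n : nat) (h : 'I_n -> nat) (S : {set 'I_n}) (rho : 'S_n) :
  {in S &, injective h} -> rho \in Sym S ->
  {in S &, forall x y, (h x < h y) = (h (rho x) < h (rho y))} -> rho = 1%g.
Proof.
move=> hinj; rewrite inE => ron H.
pose rank x := #|[set y in S | h y < h x]|.
have rank_lt : forall x y, x \in S -> h x < h y -> rank x < rank y.
  move=> x y xS lt; apply: proper_card; apply/properP; split.
    by apply/subsetP => z; rewrite !inE => /andP[-> /ltn_trans]; apply.
  by exists x; rewrite !inE ?xS ?lt ?ltnn.
have rank_rho : forall x, x \in S -> rank (rho x) = rank x.
  move=> x xS; rewrite /rank.
  have -> : [set y in S | h y < h x] = rho @^-1: [set z in S | h z < h (rho x)].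
    apply/setP => y; rewrite !inE (perm_closed y ron).
    by case yS: (y \in S) => //; rewrite H.
  by rewrite card_preimset //; apply: perm_inj.
apply/permP => x; rewrite perm1.
case xS: (x \in S); last by rewrite (out_perm ron) ?xS.
have rxS : rho x \in S by rewrite (perm_closed x ron).
have := rank_rho x xS.
case: (ltngtP (h x) (h (rho x))) => [lt|gt|eq].
- by move=> E; move: (rank_lt _ _ xS lt); rewrite E ltnn.
- by move=> E; move: (rank_lt _ _ rxS gt); rewrite E ltnn.
- by move=> _; apply: hinj.
Qed.

Definition coversb n (f : 'I_n -> letter) (pi : 'S_n) : bool :=
  [forall i, forall j, if f i is Some a then
     (if f j is Some b then (a < b) == (pi i < pi j) else true) else true].

Lemma coversP n (f : 'I_n -> letter) (pi : 'S_n) : reflect (covers f pi) (coversb f pi).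
Proof.
apply: (iffP forallP) => [H i j a b fi fj | H i].
  by have /forallP/(_ j) := H i; rewrite fi fj => /eqP.
apply/forallP => j; case fi: (f i) => [a|] //; case fj: (f j) => [b|] //.
by rewrite (H _ _ _ _ fi fj).
Qed.

Lemma count_cover n (g : 'I_n -> letter) :
  (forall j1 j2 a, g j1 = Some a -> g j2 = Some a -> j1 = j2) ->
  #|[set pi : 'S_n | coversb g pi]| * (#|[set j | g j != None]|)`! = n`!.
Proof.
move=> gdist.
set S := [set j | g j != None]; set C := [set pi : 'S_n | coversb g pi].
pose h j := odflt 0 (g j).
have gS : forall x, x \in S -> g x = Some (h x).
  by move=> x; rewrite inE /h; case: (g x).
have hinj : {in S &, injective h}.
  move=> x y xS yS E; apply: (gdist x y (h x)); first exact: gS.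
  by rewrite E; apply: gS.
rewrite -card_Sym -cardsX -card_Sn.
rewrite -(card_in_imset (f := fun p : 'S_n * 'S_n => (p.2 * p.1)%g)).
  apply: eq_card => s; rewrite [RHS]inE; apply/imsetP.
  have [r0 r0S H] := exists_sort (ltnSn #|S|) hinj s.
  exists (r0 * s, r0^-1)%g; last by rewrite /= mulgA mulVg mul1g.
  rewrite inE groupV r0S andbT inE; apply/coversP => i j a b gi gj.
  have iS : i \in S by rewrite inE gi.
  have jS : j \in S by rewrite inE gj.
  move: (gS i iS) (gS j jS); rewrite gi gj => -[->] [->].
  by rewrite !permM H.
move=> [p1 r1] [p2 r2]; rewrite !inE /= => /andP[/coversP c1 s1] /andP[/coversP c2 s2] E.
set rho := (r2^-1 * r1)%g.
have rS : rho \in Sym S by rewrite groupM ?groupV ?inE.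
have p2E : p2 = (rho * p1)%g by rewrite /rho -mulgA E mulgA mulVg mul1g.
have : rho = 1%g.
  apply: (order_pres_id (h := fun x => (p1 x : nat)) _ rS).
    by move=> x y _ _ /val_inj; apply: perm_inj.
  move=> x y xS yS.
  rewrite -(c1 _ _ _ _ (gS x xS) (gS y yS)) (c2 _ _ _ _ (gS x xS) (gS y yS)).
  by rewrite p2E !permM.
move=> r1E.
have r12 : r1 = r2 by rewrite -(mulKVg r2 r1) -/rho r1E mulg1.
by rewrite p2E r1E mul1g r12.
Qed.

From mathcomp Require Import zify.

Lemma card_sum_bool (T : finType) (A : {pred T}) : #|A| = \sum_(x : T) (x \in A).
Proof. by rewrite -sum1_card big_mkcond; apply: eq_bigr => x _; case: (x \in A). Qed.

Lemma sum_periodic (D : nat -> nat) c : (forall i, D (i + c) = D i) ->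
  forall m, \sum_(0 <= j < m * c) D j = m * \sum_(0 <= j < c) D j.
Proof.
move=> Dc; have Dmc : forall m i, D (i + m * c) = D i.
  by elim=> [|m IH] i; rewrite ?addn0 // mulSn addnA IH Dc.
elim=> [|m IH]; first by rewrite mul0n big_geq.
rewrite mulSn addnC (big_cat_nat _ (leq_addr _ _)) //= IH.
rewrite -{1}[m * c]add0n big_addn addKn.
have -> : \sum_(0 <= i < c) D (i + m * c) = \sum_(0 <= i < c) D i.
  by apply: eq_bigr => j _; rewrite Dmc.
by rewrite mulSn addnC.
Qed.

Theorem corollary1 (n k : nat) (u : seq letter) :
  universal_cycle n u ->
  0 < size u ->
  k <= n ->
  (forall i, i < size u -> diamonds_in u n i = n - k) ->
  let N := size u in
  let c := gcdn n N in
  [/\ N = k`!,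
      (forall i, (nth Diamond u (i %% N) == Diamond)
                 = (nth Diamond u ((i + c) %% N) == Diamond)),
      (n %/ c) %| (n - k) &
      (1 <= k <= n - 1 -> c != 1)].
Proof.
move=> [nN upos dist cov] Npos kn hD N c.
pose D i := (nth Diamond u (i %% N) == Diamond).
have hDall : forall i, diamonds_in u n i = n - k.
  move=> i; rewrite -(hD (i %% N)) ?ltn_pmod //.
  by apply: eq_card => j; rewrite !inE /cfactor modnDml.
have dsum : forall i, diamonds_in u n i = \sum_(j < n) D (i + j).
  by move=> i; rewrite /diamonds_in card_sum_bool.
have Dn : forall i, D (i + n) = D i.
  move=> i; have := hDall i.+1; rewrite -(hDall i) !dsum.
  case: (n) => [|m]; first by rewrite addn0.
  rewrite big_ord_recr big_ord_recl /= addn0.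
  rewrite [(D i : nat) + _]addnC.
  have -> : \sum_(i0 < m) D (i.+1 + i0) = \sum_(i0 < m) D (i + bump 0 i0).
    by apply: eq_bigr => j _; rewrite addSnnS.
  by move=> E; have := addnI E; rewrite addSnnS; case: (D (i + m.+1)); case: (D i).
have DN : forall i, D (i + N) = D i by move=> i; rewrite /D modnDr.
have Dmul : forall p, (forall i, D (i + p) = D i) -> forall a i, D (i + a * p) = D i.
  by move=> p Dp; elim=> [|a IH] i; rewrite ?addn0 // mulSn addnA IH Dp.
have Dc : forall i, D (i + c) = D i.
  move=> i; have [a _ dv] := Bezoutl n Npos.
  rewrite gcdnC -/c in dv.
  rewrite -(Dmul _ Dn a) -addnA -(divnK dv) Dmul //.
have cpos : 0 < c by rewrite gcdn_gt0 Npos orbT.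
have p3 : (n %/ c) %| (n - k).
  have := dsum 0; rewrite hDall => ->.
  rewrite -(big_mkord xpredT (fun j => (D (0 + j) : nat))) -{2}(divnK (dvdn_gcdl n N)) -/c.
  rewrite (_ : \sum_(0 <= j < n %/ c * c) _ = n %/ c * \sum_(0 <= j < c) (D (0 + j) : nat)).
    exact: dvdn_mulr.
  apply: (sum_periodic (D := fun j => nat_of_bool (D (0 + j)))) => i.
  by rewrite !add0n Dc.
split=> //.
- pose C (i : 'I_N) := [set pi : 'S_n | coversb (cfactor u n i) pi].
  have hC : forall i : 'I_N, #|C i| * k`! = n`!.
    move=> i; have := count_cover (dist i (ltn_ord i)).
    have -> : #|[set j | cfactor u n i j != None]| = k; last by [].
    have := cardC [pred j : 'I_n | cfactor u n i j == Diamond].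
    rewrite card_ord (_ : #|[pred j : 'I_n | cfactor u n i j == Diamond]| = n - k); last first.
      by rewrite -(hDall i).
    rewrite (_ : #|[predC [pred j : 'I_n | cfactor u n i j == Diamond]]| =
                 #|[set j | cfactor u n i j != None]|); last first.
      by apply: eq_card => j; rewrite !inE.
    lia.
  have hS : \sum_(i < N) #|C i| = #|[set: {perm 'I_n}]|.
    rewrite [RHS]card_sum_bool.
    rewrite [LHS](eq_bigr (fun i => \sum_(pi : 'S_n) nat_of_bool (pi \in C i))); last by move=> i _; rewrite card_sum_bool.
    rewrite exchange_big; apply: eq_bigr => pi _.
    have [i0 [H0 Hu]] := cov pi.
    rewrite (bigD1 i0) //= big1 => [|j ji0].
      by rewrite !inE; move/coversP: H0 => ->.
    apply/eqP; rewrite eqb0; apply/negP; rewrite inE => /coversP/Hu E.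
    by move: ji0; rewrite -E eqxx.
  pose q := #|C (Ordinal Npos)|.
  have hq : forall i, #|C i| = q.
    by move=> i; apply/eqP; rewrite -(eqn_pmul2r (fact_gt0 k)) hC hC.
  rewrite (eq_bigr (fun _ => q)) in hS; last by move=> i _; exact: hq.
  rewrite sum_nat_const card_ord cardsT card_Sn in hS.
  have qpos : 0 < q.
    have := hC (Ordinal Npos); rewrite -/q; case: (q) => //= /esym.
    by move/eqP; rewrite eqn0Ngt fact_gt0.
  by apply/eqP; rewrite -(eqn_pmul2r qpos) hS -(hC (Ordinal Npos)) mulnC.
- by move=> i; rewrite -/(D i) -/(D (i + c)) Dc.
- move=> /andP[k1 kn1]; apply/eqP => c1.
  move: p3; rewrite c1 divn1 => /dvdn_leq; lia.
Qed.
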